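(* Let $I$ be a poset and $\mathcal{G}:I\to\mathsf{Grp}$ a functor to small groupoids with values $\mathcal{G}_i$ and, for $i\le j$, functors $\psi_{ij}:\mathcal{G}_i\to\mathcal{G}_j$. Let $\delta:\operatorname{2-colim}\mathcal{G}\to\operatorname{colim}\mathcal{G}$ be the canonical comparison functor. Then $\delta$ is an equivalence of categories if and only if the following holds: for every groupoid $\mathsf{D}$ and every pseudo-cocone $(\beta_i,\tau_{ij})$ on $\mathcal{G}$ with vertex $\mathsf{D}$ (functors $\beta_i:\mathcal{G}_i\to\mathsf{D}$ and natural isomorphisms $\tau_{ij}:\beta_j\psi_{ij}\Rightarrow\beta_i$ for $i\le j$ with $\tau_{ik}=\tau_{ij}\circ(\tau_{jk}\star\psi_{ij})$ for all $i\le j\le k$), there exist functors $\beta'_i:\mathcal{G}_i\to\mathsf{D}$ and natural transformations $\mu_i:\beta_i\Rightarrow\beta'_i$ such that $\beta'_i=\beta'_j\circ\psi_{ij}$ and $\tau_{ij}=\mu_i^{-1}\circ(\mu_j\star\psi_{ij})$ for all $i\le j$.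
   Context: For a functor $F$ and natural transformation $\alpha:G_1\Rightarrow G_2$, $\alpha\star F$ denotes the induced transformation $G_1F\Rightarrow G_2F$. The colimit $\operatorname{colim}\mathcal{G}$ is a groupoid with functors $\alpha_i:\mathcal{G}_i\to\operatorname{colim}\mathcal{G}$, $\alpha_i=\alpha_j\psi_{ij}$, universal in the strict sense: for every groupoid $\mathsf{D}$, composition with the $\alpha_i$ gives an isomorphism of groupoids from $\mathrm{Hom}(\operatorname{colim}\mathcal{G},\mathsf{D})$ to the groupoid of strict cocones (families $\beta_i$ with $\beta_i=\beta_j\psi_{ij}$, morphisms compatible families of natural transformations). The 2-colimit $\operatorname{2-colim}\mathcal{G}$ is a groupoid with functors $\alpha_i:\mathcal{G}_i\to\operatorname{2-colim}\mathcal{G}$ and natural isomorphisms $\lambda_{ij}:\alpha_j\psi_{ij}\Rightarrow\alpha_i$ satisfying $\lambda_{ik}=\lambda_{ij}\circ(\lambda_{jk}\star\psi_{ij})$, such that for every groupoid $\mathsf{D}$, the functor $\chi\mapsto(\chi\alpha_i,\chi\star\lambda_{ij})$ from $\mathrm{Hom}(\operatorname{2-colim}\mathcal{G},\mathsf{D})$ to the groupoid of pseudo-cocones with vertex $\mathsf{D}$ (morphisms: families of natural transformations $\theta_i:\beta_i\Rightarrow\beta''_i$ compatible with the $\tau_{ij}$) is an equivalence; it is unique up to equivalence. The comparison functor $\delta$ is the functor (determined up to isomorphism) corresponding, under this universal property, to the pseudo-cocone given by the colimit functors $\alpha_i:\mathcal{G}_i\to\operatorname{colim}\mathcal{G}$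 with identity transformations. *)

(* Defs.v *)
From mathcomp Require Import all_boot all_order.
Set Implicit Arguments.
Unset Strict Implicit.
Unset Printing Implicit Defensive.

(* Small groupoids, presented "arrows-only": a type of objects, a type  *)
(* of all morphisms with source/target maps, identities, composition    *)
(* (cmp g f = g o f, meaningful when src g = tgt f) and inverses.       *)
Record Groupoid := {
  obj : Type;
  mor : Type;
  src : mor -> obj;
  tgt : mor -> obj;
  idm : obj -> mor;
  cmp : mor -> mor -> mor;
  ginv : mor -> mor;
  src_id : forall x, src (idm x) = x;
  tgt_id : forall x, tgt (idm x) = x;
  src_cmp : forall g f, src g = tgt f -> src (cmp g f) = src f;
  tgt_cmp : forall g f, src g = tgt f -> tgt (cmp g f) = tgt g;
  cmp_id_l : forall f, cmp (idm (tgt f)) f = f;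
  cmp_id_r : forall f, cmp f (idm (src f)) = f;
  cmp_assoc : forall h g f, src h = tgt g -> src g = tgt f ->
                cmp h (cmp g f) = cmp (cmp h g) f;
  src_inv : forall f, src (ginv f) = tgt f;
  tgt_inv : forall f, tgt (ginv f) = src f;
  inv_l : forall f, cmp (ginv f) f = idm (src f);
  inv_r : forall f, cmp f (ginv f) = idm (tgt f)
}.

Record Functor (C D : Groupoid) := {
  fobj : obj C -> obj D;
  fmor : mor C -> mor D;
  fsrc : forall f, src (fmor f) = fobj (src f);
  ftgt : forall f, tgt (fmor f) = fobj (tgt f);
  fid : forall x, fmor (idm x) = idm (fobj x);
  fcmp : forall g f, src g = tgt f -> fmor (cmp g f) = cmp (fmor g) (fmor f)
}.

Definition idF (C : Groupoid) : Functor C C.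
Proof.
refine (@Build_Functor C C (fun x => x) (fun f => f) _ _ _ _); by [].
Defined.

Definition compF (B C D : Groupoid) (G : Functor C D) (F : Functor B C) :
  Functor B D.
Proof.
refine (@Build_Functor B D (fun x => fobj G (fobj F x))
          (fun f => fmor G (fmor F f)) _ _ _ _).
- by move=> f; rewrite fsrc fsrc.
- by move=> f; rewrite ftgt ftgt.
- by move=> x; rewrite fid fid.
- move=> g f h; rewrite fcmp // fcmp //.
  by rewrite fsrc ftgt h.
Defined.

Definition feq (C D : Groupoid) (F G : Functor C D) : Prop :=
  (forall x, fobj F x = fobj G x) /\ (forall f, fmor F f = fmor G f).

Definition is_nat (C D : Groupoid) (F G : Functor C D) (eta : obj C -> mor D)
  : Prop :=
  (forall x, src (eta x) = fobj F x /\ tgt (eta x) = fobj G x) /\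
  (forall f, cmp (eta (tgt f)) (fmor F f) = cmp (fmor G f) (eta (src f))).

Definition is_equivalence (C D : Groupoid) (F : Functor C D) : Prop :=
  exists (G : Functor D C) (eta : obj C -> mor C) (eps : obj D -> mor D),
    is_nat (compF G F) (idF C) eta /\ is_nat (compF F G) (idF D) eps.

Section Diagrams.
Variables (d : Order.disp_t) (I : porderType d) (G : I -> Groupoid)
  (psi : forall i j : I, (i <= j)%O -> Functor (G i) (G j)).

Definition is_diagram : Prop :=
  (forall i (h : (i <= i)%O), feq (psi h) (idF (G i))) /\
  (forall i j k (hij : (i <= j)%O) (hjk : (j <= k)%O) (hik : (i <= k)%O),
      feq (psi hik) (compF (psi hjk) (psi hij))).

Definition is_scocone (D : Groupoid) (beta : forall i, Functor (G i) D) : Prop :=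
  forall i j (h : (i <= j)%O), feq (beta i) (compF (beta j) (psi h)).

Definition is_pcocone (D : Groupoid) (beta : forall i, Functor (G i) D)
  (tau : forall i j : I, (i <= j)%O -> obj (G i) -> mor D) : Prop :=
  (forall i j (h : (i <= j)%O), is_nat (compF (beta j) (psi h)) (beta i) (tau i j h)) /\
  (forall i j k (hij : (i <= j)%O) (hjk : (j <= k)%O) (hik : (i <= k)%O) x,
      tau i k hik x = cmp (tau i j hij x) (tau j k hjk (fobj (psi hij) x))).

Definition pc_compat (D : Groupoid)
  (tau tau'' : forall i j : I, (i <= j)%O -> obj (G i) -> mor D)
  (theta : forall i, obj (G i) -> mor D) : Prop :=
  forall i j (h : (i <= j)%O) x,
    cmp (theta i x) (tau i j h x) = cmp (tau'' i j h x) (theta j (fobj (psi h) x)).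

(* Strict colimit: composition with alpha is an isomorphism of groupoids
   Hom(L, D) -> strict cocones with vertex D (bijective on objects and
   on morphisms), for every groupoid D. *)
Definition is_colimit (L : Groupoid) (alpha : forall i, Functor (G i) L) : Prop :=
  is_scocone alpha /\
  forall D : Groupoid,
    (forall beta : forall i, Functor (G i) D, is_scocone beta ->
       exists chi : Functor L D, forall i, feq (compF chi (alpha i)) (beta i)) /\
    (forall chi chi' : Functor L D,
       (forall i, feq (compF chi (alpha i)) (compF chi' (alpha i))) -> feq chi chi') /\
    (forall (chi chi' : Functor L D) (theta : forall i, obj (G i) -> mor D),
       (forall i, is_nat (compF chi (alpha i)) (compF chi' (alpha i)) (theta i)) ->
       (forall i j (h : (i <= j)%O) x, theta i x = theta j (fobj (psi h) x)) ->
       exists t, is_nat chi chi' t /\ forall i x, t (fobj (alpha i) x) = theta i x) /\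
    (forall (chi chi' : Functor L D) (t t' : obj L -> mor D),
       is_nat chi chi' t -> is_nat chi chi' t' ->
       (forall i x, t (fobj (alpha i) x) = t' (fobj (alpha i) x)) ->
       forall y, t y = t' y).

(* 2-colimit: chi |-> (chi alpha_i, chi * lambda_ij) is an equivalence
   Hom(C, D) -> pseudo-cocones with vertex D (essentially surjective,
   full and faithful), for every groupoid D. *)
Definition is_2colimit (C : Groupoid) (alpha : forall i, Functor (G i) C)
  (lambda : forall i j : I, (i <= j)%O -> obj (G i) -> mor C) : Prop :=
  is_pcocone alpha lambda /\
  forall D : Groupoid,
    (forall (beta : forall i, Functor (G i) D)
            (tau : forall i j : I, (i <= j)%O -> obj (G i) -> mor D),
       is_pcocone beta tau ->
       exists (chi : Functor C D) (theta : forall i, obj (G i) -> mor D),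
         (forall i, is_nat (compF chi (alpha i)) (beta i) (theta i)) /\
         pc_compat (fun i j h x => fmor chi (lambda i j h x)) tau theta) /\
    (forall (chi chi' : Functor C D) (theta : forall i, obj (G i) -> mor D),
       (forall i, is_nat (compF chi (alpha i)) (compF chi' (alpha i)) (theta i)) ->
       pc_compat (fun i j h x => fmor chi (lambda i j h x))
                 (fun i j h x => fmor chi' (lambda i j h x)) theta ->
       exists t, is_nat chi chi' t /\ forall i x, t (fobj (alpha i) x) = theta i x) /\
    (forall (chi chi' : Functor C D) (t t' : obj C -> mor D),
       is_nat chi chi' t -> is_nat chi chi' t' ->
       (forall i x, t (fobj (alpha i) x) = t' (fobj (alpha i) x)) ->
       forall y, t y = t' y).

(* delta : C -> L is (a choice of) the comparison functor: under the
   2-colimit universal property it corresponds, up to isomorphism of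
   pseudo-cocones, to (alphaL_i, identities). *)
Definition is_comparison (C : Groupoid) (alphaC : forall i, Functor (G i) C)
  (lambda : forall i j : I, (i <= j)%O -> obj (G i) -> mor C)
  (L : Groupoid) (alphaL : forall i, Functor (G i) L) (delta : Functor C L) : Prop :=
  exists theta : forall i, obj (G i) -> mor L,
    (forall i, is_nat (compF delta (alphaC i)) (alphaL i) (theta i)) /\
    pc_compat (fun i j h x => fmor delta (lambda i j h x))
              (fun i j h x => idm (fobj (alphaL i) x)) theta.

End Diagrams.

(* Main.v *)
Require Import Defs.
From mathcomp Require Import all_boot all_order.
Set Implicit Arguments.
Unset Strict Implicit.


Ltac sc :=
  repeat match goal with
  | |- context [src (cmp ?g ?f)] => rewrite (@src_cmp _ g f); [|sc]
  | |- context [tgt (cmp ?g ?f)] => rewrite (@tgt_cmp _ g f); [|sc]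
  | |- context [src (ginv _)] => rewrite src_inv
  | |- context [tgt (ginv _)] => rewrite tgt_inv
  | |- context [src (idm _)] => rewrite src_id
  | |- context [tgt (idm _)] => rewrite tgt_id
  | |- context [src (fmor _ _)] => rewrite fsrc
  | |- context [tgt (fmor _ _)] => rewrite ftgt
  | H : forall x, src (?s x) = _ |- context [src (?s _)] => rewrite H
  | H : forall x, tgt (?s x) = _ |- context [tgt (?s _)] => rewrite H
  | H : forall i x, src (?s i x) = _ |- context [src (?s _ _)] => rewrite H
  | H : forall i x, tgt (?s i x) = _ |- context [tgt (?s _ _)] => rewrite H
  | H : forall i j h x, src (?s i j h x) = _ |- context [src (?s _ _ _ _)] => rewrite H
  | H : forall i j h x, tgt (?s i j h x) = _ |- context [tgt (?s _ _ _ _)] => rewrite H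
  end; try done.

Section GL.
Variable X : Groupoid.
Implicit Types f g h : mor X.

Lemma inv_unique f h : src h = tgt f -> cmp h f = idm (src f) -> h = ginv f.
Proof.
move=> e1 e2.
have -> : h = cmp h (cmp f (ginv f)) by rewrite inv_r -e1 cmp_id_r.
rewrite cmp_assoc ?tgt_inv // e2.
by rewrite -(tgt_inv f) cmp_id_l.
Qed.

Lemma lcancel g f : src g = tgt f -> cmp (ginv g) (cmp g f) = f.
Proof.
move=> e; rewrite cmp_assoc ?src_inv // inv_l e cmp_id_l //.
Qed.

Lemma rcancel g f : src g = tgt f -> cmp (cmp g f) (ginv f) = g.
Proof.
move=> e; rewrite -cmp_assoc ?tgt_inv // inv_r -e cmp_id_r //.
Qed.

Lemma inv_inv f : ginv (ginv f) = f.
Proof.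
symmetry; apply: inv_unique; first by rewrite tgt_inv.
by rewrite inv_r src_inv.
Qed.

Lemma lcancel2 g f : tgt g = tgt f -> cmp g (cmp (ginv g) f) = f.
Proof.
move=> e; have := @lcancel (ginv g) f; rewrite inv_inv; apply; by rewrite src_inv.
Qed.

Lemma inv_cmp g f : src g = tgt f -> ginv (cmp g f) = cmp (ginv f) (ginv g).
Proof.
move=> e; symmetry; apply: inv_unique.
  by rewrite src_cmp ?src_inv ?tgt_inv // tgt_cmp.
rewrite -cmp_assoc ?src_inv ?tgt_inv ?tgt_cmp ?src_cmp //.
by rewrite lcancel // inv_l.
Qed.
End GL.

Lemma fmor_inv C D (F : Functor C D) f : fmor F (ginv f) = ginv (fmor F f).
Proof.
apply: inv_unique; first by rewrite fsrc ftgt src_inv.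
by rewrite -fcmp ?src_inv // inv_l fid fsrc.
Qed.

Lemma nat_src C D (F G : Functor C D) s : is_nat F G s -> forall x, src (s x) = fobj F x.
Proof. by case=> H _ x; case: (H x). Qed.
Lemma nat_tgt C D (F G : Functor C D) s : is_nat F G s -> forall x, tgt (s x) = fobj G x.
Proof. by case=> H _ x; case: (H x). Qed.

Lemma nat_feq C D (F F' G G' : Functor C D) s :
  feq F F' -> feq G G' -> is_nat F G s -> is_nat F' G' s.
Proof.
move=> [F1 F2] [G1 G2] [H1 H2]; split.
  by move=> x; rewrite -F1 -G1.
by move=> f; rewrite -F2 -G2.
Qed.

Lemma nat_comp C D (F G G' H : Functor C D) s t :
  feq G G' -> is_nat F G s -> is_nat G' H t -> is_nat F H (fun x => cmp (t x) (s x)).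
Proof.
move=> e Hs Ht; have {}Ht := nat_feq (conj (fun x => esym (e.1 x)) (fun f => esym (e.2 f)))
   (conj (fun x => erefl) (fun f => erefl)) Ht.
have ss := nat_src Hs; have st := nat_tgt Hs; have ts := nat_src Ht; have tt := nat_tgt Ht.
split.
  by move=> x; rewrite src_cmp ?tgt_cmp ?ss ?st ?ts ?tt.
move=> f.
rewrite -cmp_assoc ?ts ?st ?ftgt //.
rewrite Hs.2 cmp_assoc ?ts ?ftgt ?fsrc //.
rewrite Ht.2 -cmp_assoc ?ftgt ?tt ?fsrc ?ts ?st //.
Qed.

Lemma nat_inv C D (F G : Functor C D) s : is_nat F G s -> is_nat G F (fun x => ginv (s x)).
Proof.
move=> Hs; have ss := nat_src Hs; have st := nat_tgt Hs.
split; first by move=> x; rewrite src_inv tgt_inv ss st.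
move=> f.
have e := Hs.2 f.
have e2 : fmor F f = cmp (ginv (s (tgt f))) (cmp (fmor G f) (s (src f))).
  by rewrite -e lcancel; sc.
rewrite e2 -cmp_assoc; try sc.
by rewrite rcancel; sc.
Qed.
Lemma nat_whr B C D (K : Functor C D) (F G : Functor B C) s :
  is_nat F G s -> is_nat (compF K F) (compF K G) (fun x => fmor K (s x)).
Proof.
move=> Hs; have ss := nat_src Hs; have st := nat_tgt Hs.
split; first by move=> x; rewrite fsrc ftgt ss st.
move=> f /=; rewrite -!fcmp ?Hs.2 // ?ss ?st ?ftgt ?fsrc //.
Qed.

Lemma nat_whl B C D (P : Functor B C) (F G : Functor C D) s :
  is_nat F G s -> is_nat (compF F P) (compF G P) (fun x => s (fobj P x)).
Proof.
move=> Hs; split; first by move=> x; apply: Hs.1.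
move=> f /=; have := Hs.2 (fmor P f); by rewrite fsrc ftgt.
Qed.
Theorem lemma4p2 (d : Order.disp_t) (I : porderType d) (G : I -> Groupoid)
  (psi : forall i j : I, (i <= j)%O -> Functor (G i) (G j))
  (C : Groupoid) (alphaC : forall i, Functor (G i) C)
  (lambda : forall i j : I, (i <= j)%O -> obj (G i) -> mor C)
  (L : Groupoid) (alphaL : forall i, Functor (G i) L)
  (delta : Functor C L) :
  is_diagram psi ->
  is_2colimit psi alphaC lambda ->
  is_colimit psi alphaL ->
  is_comparison psi alphaC lambda alphaL delta ->
  (is_equivalence delta <->
   forall (D : Groupoid) (beta : forall i, Functor (G i) D)
          (tau : forall i j : I, (i <= j)%O -> obj (G i) -> mor D),
     is_pcocone psi beta tau ->
     exists (beta' : forall i, Functor (G i) D)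
            (mu : forall i, obj (G i) -> mor D),
       (forall i, is_nat (beta i) (beta' i) (mu i)) /\
       (forall i j (h : (i <= j)%O), feq (beta' i) (compF (beta' j) (psi i j h))) /\
       (forall i j (h : (i <= j)%O) x,
          tau i j h x = cmp (ginv (mu i x)) (mu j (fobj (psi i j h) x)))).
Proof.
move=> _ [Hpc2 H2] [Hsc Hcol] [kappa [Hk Kc]].
have Hl := Hpc2.1.
have ks i := nat_src (Hk i). have kt i := nat_tgt (Hk i).
have ls i j h := nat_src (Hl i j h). have lt i j h := nat_tgt (Hl i j h).
have K' : forall i j h x, cmp (kappa i x) (fmor delta (lambda i j h x)) = kappa j (fobj (psi i j h) x).
  move=> i j h x.
  rewrite Kc; have -> : fobj (alphaL i) x = tgt (kappa j (fobj (psi i j h) x)) by rewrite kt; exact: (Hsc i j h).1.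
  by rewrite cmp_id_l.
split.
- move=> [E [eta [eps [Heta Heps]]]] D beta tau Hpc.
  have [chi [theta [Hth Tc]]] := (H2 D).1 beta tau Hpc.
  have tas i j h := nat_src (Hpc.1 i j h). have tat i j h := nat_tgt (Hpc.1 i j h).
  have ths i := nat_src (Hth i). have tht i := nat_tgt (Hth i).
  have es := nat_src Heta. have et := nat_tgt Heta.
  pose rho i x := cmp (theta i x) (fmor chi (eta (fobj (alphaC i) x))).
  have Hrho : forall i, is_nat (compF chi (compF (compF E delta) (alphaC i))) (beta i) (rho i).
    move=> i; apply: (nat_comp _ (nat_whr chi (nat_whl (alphaC i) Heta)) (Hth i)).
    by split.
  pose mu i x := cmp (fmor (compF chi E) (kappa i x)) (ginv (rho i x)).
  have Hmu : forall i, is_nat (beta i) (compF (compF chi E) (alphaL i)) (mu i).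
    move=> i; apply: (nat_comp _ (nat_inv (Hrho i)) (nat_whr (compF chi E) (Hk i))).
    by split.
  exists (fun i => compF (compF chi E) (alphaL i)), mu; split => //; split.
    move=> i j h; split => x /=.
      by rewrite ((Hsc i j h).1 x).
    by rewrite ((Hsc i j h).2 x).
  move=> i j h x.
  set y := fobj (psi i j h) x.
  have eLx : fobj (alphaL i) x = fobj (alphaL j) y := (Hsc i j h).1 x.
  have F2 : cmp (fmor (compF chi E) (kappa i x)) (fmor (compF chi E) (fmor delta (lambda i j h x)))
            = fmor (compF chi E) (kappa j y).
    by rewrite -fcmp -?K'; sc.
  have Nl : cmp (eta (fobj (alphaC i) x)) (fmor E (fmor delta (lambda i j h x)))
            = cmp (lambda i j h x) (eta (fobj (alphaC j) y)).
    by have := Heta.2 (lambda i j h x); rewrite lt ls.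
  have F1 : cmp (rho i x) (fmor chi (fmor E (fmor delta (lambda i j h x)))) = cmp (tau i j h x) (rho j y).
    rewrite /rho -cmp_assoc; try sc.
    rewrite -fcmp; try sc.
    rewrite Nl fcmp; try sc.
    rewrite cmp_assoc; try sc.
    rewrite (Tc i j h x) -cmp_assoc; try sc.
  have rs k := nat_src (Hrho k). have rt k := nat_tgt (Hrho k).
  have Ks k := nat_src (Hk k). have Kt k := nat_tgt (Hk k).
  rewrite /mu inv_cmp; try sc.
  rewrite inv_inv -F2.
  rewrite cmp_assoc; try sc.
  rewrite -[cmp (cmp (rho i x) _) (cmp _ _)]cmp_assoc; try sc.
  rewrite lcancel; try sc.
  rewrite F1 rcancel; try sc.
- move=> Hst.
  have [beta' [mu [Hmu [Hs' Hlam]]]] := Hst C alphaC lambda Hpc2.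
  have [E HE] := (Hcol C).1 beta' Hs'.
  have ms k := nat_src (Hmu k). have mt k := nat_tgt (Hmu k).
  have Ks k := nat_src (Hk k). have Kt k := nat_tgt (Hk k).
  have eB k z : fobj (beta' k) z = fobj E (fobj (alphaL k) z) by rewrite -(HE k).1.
  pose th1 i x := cmp (ginv (mu i x)) (fmor E (kappa i x)).
  have Hth1 : forall i, is_nat (compF (compF E delta) (alphaC i)) (compF (idF C) (alphaC i)) (th1 i).
    move=> i; exact: (nat_comp (HE i) (nat_whr E (Hk i)) (nat_inv (Hmu i))).
  have C1 : pc_compat psi (fun i j h x => fmor (compF E delta) (lambda i j h x))
      (fun i j h x => fmor (idF C) (lambda i j h x)) th1.
    move=> i j h x /=; rewrite /th1.
    rewrite -cmp_assoc; try sc.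
    rewrite -fcmp; try sc.
    rewrite K' Hlam.
    rewrite -cmp_assoc; try sc.
    rewrite lcancel2; try sc.
    all: try by rewrite ?eB ?(Hsc i j h).1.
  have [t1 [Ht1 _]] := (H2 C).2.1 (compF E delta) (idF C) th1 Hth1 C1.
  pose th2 i x := cmp (kappa i x) (ginv (fmor delta (mu i x))).
  have Hth2 : forall i, is_nat (compF (compF delta E) (alphaL i)) (compF (idF L) (alphaL i)) (th2 i).
    move=> i; apply: (nat_feq _ _ (nat_comp _ (nat_inv (nat_whr delta (Hmu i))) (Hk i))) => //.
    by split => x /=; rewrite -?(HE i).1 -?(HE i).2.
  have C2 : forall i j h x, th2 i x = th2 j (fobj (psi i j h) x).
    move=> i j h x; rewrite /th2 -(K' i j h x) Hlam fcmp; try sc.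
    rewrite !fmor_inv -cmp_assoc; try sc.
    rewrite rcancel; try sc.
    all: try by rewrite ((Hs' i j h).1 x).
  have [t2 [Ht2 _]] := (Hcol L).2.2.1 (compF delta E) (idF L) th2 Hth2 C2.
  by exists E, t1, t2.
Qed.
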